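(* Let $0<\alpha_i\le\beta_i$ for $i=1,\ldots,n$, $\alpha:=\sum_{i=1}^n\alpha_i$ and $\beta:=\sum_{i=1}^n\beta_i$. (i) If $\psi\in\Psi_n$, then $\alpha\,\psi\left(\frac{\alpha_1}{\alpha},\ldots,\frac{\alpha_n}{\alpha}\right)\le\beta\,\psi\left(\frac{\beta_1}{\beta},\ldots,\frac{\beta_n}{\beta}\right)$. (ii) If $\psi\in\Psi_n^{\rm sc}$ and $\alpha_i<\beta_i$ for some $i\in\{1,\ldots,n\}$, then this inequality is strict.
   Context: $n\ge2$ is an integer. $\Omega_n:=\{(t_1,\ldots,t_n)\in\mathbb{R}^n: t_1,\ldots,t_n\ge0,\ t_1+\cdots+t_n=1\}$ and $\Omega_n^\circ:=\{t\in\Omega_n: t_1,\ldots,t_n<1\}$; $\mathbf{e}_i$ denotes the $i$th standard unit vector of $\mathbb{R}^n$. $\Psi_n$ is the class of all convex continuous functions $\psi:\Omega_n\to\mathbb{R}$ such that (B1) $\psi(\mathbf{e}_1)=\cdots=\psi(\mathbf{e}_n)=1$, and (B2) for every $t\in\Omega_n^\circ$ and every $i$: $\psi(t)\ge(1-t_i)\,\psi\left(\frac{t_1}{1-t_i},\ldots,\frac{t_{i-1}}{1-t_i},0,\frac{t_{i+1}}{1-t_i},\ldots,\frac{t_n}{1-t_i}\right)$. $\Psi_n^{\rm sc}$ is the subclass of strictly convex members of $\Psi_n$. *)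

(* Defs.v *)
From HB Require Import structures.
From mathcomp Require Import all_boot all_order all_algebra.
From mathcomp Require Import all_classical all_reals all_analysis.
Set Implicit Arguments. Unset Strict Implicit. Unset Printing Implicit Defensive.
Import Order.TTheory GRing.Theory Num.Theory.
Import numFieldNormedType.Exports.
Local Open Scope classical_set_scope.
Local Open Scope ring_scope.

Section Defs.
Variables (R : realType) (n : nat).

Definition Omega : set 'rV[R]_n :=
  [set t | (forall i, 0 <= t ord0 i) /\ \sum_(i < n) t ord0 i = 1].

Definition Omega_circ : set 'rV[R]_n :=
  [set t | Omega t /\ forall i, t ord0 i < 1].

Definition unitv (i : 'I_n) : 'rV[R]_n := \row_j (j == i)%:R.

Definition dropcoord (t : 'rV[R]_n) (i : 'I_n) : 'rV[R]_n :=
  \row_j (if j == i then 0 else t ord0 j / (1 - t ord0 i)).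

Definition convex_on (A : set 'rV[R]_n) (psi : 'rV[R]_n -> R) :=
  forall s t, A s -> A t -> forall l : R, 0 <= l <= 1 ->
    psi (l *: s + (1 - l) *: t) <= l * psi s + (1 - l) * psi t.

Definition strictly_convex_on (A : set 'rV[R]_n) (psi : 'rV[R]_n -> R) :=
  forall s t, A s -> A t -> s != t -> forall l : R, 0 < l < 1 ->
    psi (l *: s + (1 - l) *: t) < l * psi s + (1 - l) * psi t.

(* membership in Psi_n (psi is only relevant on Omega_n) *)
Definition in_Psi (psi : 'rV[R]_n -> R) :=
  [/\ convex_on Omega psi,
      {within Omega, continuous psi},
      (forall i, psi (unitv i) = 1) &
      (forall t, Omega_circ t -> forall i,
         (1 - t ord0 i) * psi (dropcoord t i) <= psi t)].

Definition in_Psi_sc (psi : 'rV[R]_n -> R) :=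
  in_Psi psi /\ strictly_convex_on Omega psi.

End Defs.

(* Main.v *)
Require Import Defs.
From HB Require Import structures.
From mathcomp Require Import all_boot all_order all_algebra.
From mathcomp Require Import all_classical all_reals all_analysis.
From mathcomp Require Import lra ring.
Import Order.TTheory GRing.Theory Num.Theory.
Local Open Scope ring_scope.

Section H.
Variables (R : realType) (n : nat) (psi : 'rV[R]_n -> R).

Definition SS (x : 'rV[R]_n) := \sum_(i < n) x ord0 i.
Definition FF (x : 'rV[R]_n) := SS x * psi ((SS x)^-1 *: x).

Lemma SS_lin (u v : 'rV[R]_n) l m : SS (l *: u + m *: v) = l * SS u + m * SS v.
Proof.
rewrite /SS; under eq_bigr do rewrite !mxE.
by rewrite big_split /= -!mulr_sumr.
Qed.

Lemma Omega_norm (x : 'rV[R]_n) : (forall j, 0 <= x ord0 j) -> 0 < SS x ->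
  Omega ((SS x)^-1 *: x).
Proof.
move=> hx hS; split.
  by move=> j; rewrite mxE mulr_ge0 // invr_ge0 ltW.
under eq_bigr do rewrite mxE.
by rewrite -mulr_sumr mulVf // lt0r_neq0.
Qed.

Lemma persp_gen (u v : 'rV[R]_n) l :
  (forall j, 0 <= u ord0 j) -> (forall j, 0 <= v ord0 j) ->
  0 < SS u -> 0 < SS v -> 0 <= l <= 1 ->
  exists mu W, [/\ 0 < W, 0 <= mu <= 1, (0 < l < 1 -> 0 < mu < 1),
    FF (l *: u + (1 - l) *: v) = W * psi (mu *: ((SS u)^-1 *: u) + (1 - mu) *: ((SS v)^-1 *: v)) &
    l * FF u + (1 - l) * FF v = W * (mu * psi ((SS u)^-1 *: u) + (1 - mu) * psi ((SS v)^-1 *: v))].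
Proof.
move=> hu hv hSu hSv /andP[l0 l1].
have hW : SS (l *: u + (1 - l) *: v) = l * SS u + (1 - l) * SS v by rewrite SS_lin.
have W0 : 0 < l * SS u + (1 - l) * SS v by nra.
exists (l * SS u / (l * SS u + (1 - l) * SS v)), (l * SS u + (1 - l) * SS v).
have Wn : l * SS u + (1 - l) * SS v != 0 by rewrite lt0r_neq0.
have Su : SS u != 0 by rewrite lt0r_neq0.
have Sv : SS v != 0 by rewrite lt0r_neq0.
split => //.
- apply/andP; split; first by rewrite divr_ge0 // ?mulr_ge0 // ltW.
  by rewrite ler_pdivrMr // mul1r; nra.
- move=> /andP[l0' l1']; apply/andP; split; first by rewrite divr_gt0 // ?mulr_gt0.
  by rewrite ltr_pdivrMr // mul1r; nra.
- rewrite /FF hW; congr (_ * psi _); apply/rowP => j; rewrite !mxE; field.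
  by apply/and3P; split.
- by rewrite /FF; field.
Qed.

Lemma drop_le (x : 'rV[R]_n) i : in_Psi psi ->
  (forall j, 0 < x ord0 j) -> 0 < \sum_(j | j != i) x ord0 j ->
  FF (\row_j (if j == i then 0 else x ord0 j)) <= FF x.
Proof.
move=> [_ _ _ hB] hx hr.
set y := \row_j _.
have Sx : SS x = x ord0 i + \sum_(j | j != i) x ord0 j by rewrite /SS (bigD1 i).
have Sy : SS y = \sum_(j | j != i) x ord0 j.
  rewrite /SS (bigD1 i) //= mxE eqxx add0r.
  by apply: eq_bigr => j /negbTE hj; rewrite mxE hj.
have hSx : 0 < SS x by rewrite Sx; have := hx i; lra.
have Ot : Omega_circ ((SS x)^-1 *: x).
  split; first by apply: Omega_norm => // j; apply: ltW.
  move=> k; rewrite mxE ltr_pdivrMl // mulr1.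
  rewrite Sx; case: (eqVneq k i) => [->|hk]; first by rewrite ltrDl.
  have : x ord0 k <= \sum_(j | j != i) x ord0 j.
    by rewrite (bigD1 k) //= lerDl sumr_ge0 // => j _; apply: ltW.
  have := hx i; lra.
have := hB _ Ot i.
have -> : dropcoord ((SS x)^-1 *: x) i = (SS y)^-1 *: y.
  apply/rowP => j; rewrite !mxE; case: (eqVneq j i) => _; first by rewrite mulr0.
  rewrite Sy Sx; field.
  rewrite !lt0r_neq0 //; have := hx i; lra.
rewrite /FF => h.
have e : SS x * (1 - ((SS x)^-1 *: x) ord0 i) = SS y.
  rewrite mxE Sy Sx; field; rewrite lt0r_neq0 //; have := hx i; lra.
rewrite -e -mulrA ler_pM2l //.
by rewrite e.
Qed.


Lemma mono (x x' : 'rV[R]_n) i : in_Psi psi -> (forall j, 0 < x ord0 j) ->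
  (forall j, j != i -> x' ord0 j = x ord0 j) -> x ord0 i <= x' ord0 i ->
  (exists j, j != i) ->
  (FF x <= FF x') /\ (strictly_convex_on (@Omega R n) psi -> x ord0 i < x' ord0 i -> FF x < FF x').
Proof.
move=> hP hx hx' hi [j0 hj0].
have hr : 0 < \sum_(j | j != i) x ord0 j.
  rewrite (bigD1 j0) //=; have := hx j0.
  have : 0 <= \sum_(j | (j != i) && (j != j0)) x ord0 j.
    by apply: sumr_ge0 => k _; apply: ltW.
  lra.
have xi' : 0 < x' ord0 i by apply: lt_le_trans (hx i) hi.
have hxp : forall j, 0 < x' ord0 j.
  by move=> j; case: (eqVneq j i) => [->//|/hx' ->].
have hr' : \sum_(j | j != i) x' ord0 j = \sum_(j | j != i) x ord0 j.
  by apply: eq_bigr => j /hx'.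
pose y := \row_j (if j == i then 0 else x ord0 j) : 'rV[R]_n.
have ey : y = \row_j (if j == i then 0 else x' ord0 j).
  by apply/rowP => j; rewrite !mxE; case: eqVneq => // /hx' ->.
have hy : FF y <= FF x' by rewrite ey; apply: drop_le => //; rewrite hr'.
pose l := 1 - x ord0 i / x' ord0 i.
have ex : x = l *: y + (1 - l) *: x'.
  apply/rowP => j; rewrite !mxE; case: (eqVneq j i) => [->|hj].
    by rewrite /l; field; rewrite lt0r_neq0.
  by rewrite hx' //; ring.
have Sy : SS y = \sum_(j | j != i) x ord0 j.
  rewrite /SS (bigD1 i) //= mxE eqxx add0r.
  by apply: eq_bigr => j /negbTE hj; rewrite mxE hj.
have Sx' : 0 < SS x' by rewrite /SS (bigD1 i) //= hr' addr_gt0.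
have yn : forall j, 0 <= y ord0 j.
  by move=> j; rewrite mxE; case: ifP => // _; apply: ltW.
have xn : forall j, 0 <= x' ord0 j by move=> j; apply: ltW.
have q0 : 0 <= x ord0 i / x' ord0 i by rewrite divr_ge0 // ltW.
have q1 : x ord0 i / x' ord0 i <= 1 by rewrite ler_pdivrMr // mul1r.
have hl : 0 <= l <= 1 by apply/andP; split; rewrite /l; lra.
have Sy0 : 0 < SS y by rewrite Sy.
have [mu [W [W0 hmu hmus e1 e2]]] := persp_gen y x' l yn xn Sy0 Sx' hl.
have Oy := Omega_norm y yn Sy0.
have Ox := Omega_norm x' xn Sx'.
case: hP => hc _ _ _.
have hly : l * FF y <= l * FF x' by rewrite ler_wpM2l //; case/andP: hl.
have eF : FF x = W * psi (mu *: ((SS y)^-1 *: y) + (1 - mu) *: ((SS x')^-1 *: x')).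
  by rewrite -e1 -ex.
split.
  have h1 : FF x <= l * FF y + (1 - l) * FF x'.
    by rewrite eF e2 ler_pM2l //; apply: hc.
  lra.
move=> hs hlt.
have q0' : 0 < x ord0 i / x' ord0 i by rewrite divr_gt0.
have q1' : x ord0 i / x' ord0 i < 1 by rewrite ltr_pdivrMr // mul1r.
have /hmus hm : 0 < l < 1 by apply/andP; split; rewrite /l; lra.
have hne : (SS y)^-1 *: y != (SS x')^-1 *: x'.
  apply/eqP => /(congr1 (fun m : 'rV[R]_n => m ord0 i)).
  rewrite !mxE eqxx mulr0 => h0.
  have : 0 < (SS x')^-1 * x' ord0 i by rewrite mulr_gt0 // invr_gt0.
  lra.
have h1 : FF x < l * FF y + (1 - l) * FF x'.
  by rewrite eF e2 ltr_pM2l //; apply: hs.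
lra.
Qed.


Lemma mainH (a b : 'rV[R]_n) : (2 <= n)%N -> (forall i, 0 < a ord0 i) ->
  (forall i, a ord0 i <= b ord0 i) -> in_Psi psi ->
  (FF a <= FF b) /\ (strictly_convex_on (@Omega R n) psi ->
     (exists i, a ord0 i < b ord0 i) -> FF a < FF b).
Proof.
move=> hn ha hab hP.
pose c k := \row_j (if (j < k)%N then b ord0 j else a ord0 j) : 'rV[R]_n.
have cp : forall k j, 0 < c k ord0 j.
  by move=> k j; rewrite mxE; case: ifP => _ //; apply: lt_le_trans (ha j) (hab j).
have c0 : c 0%N = a by apply/rowP => j; rewrite mxE ltn0.
have cn : c n = b by apply/rowP => j; rewrite mxE ltn_ord.
have oth : forall i : 'I_n, exists j, j != i.
  move=> i.
  have h0 : (0 < n)%N by apply: leq_trans hn.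
  have h1 : (1 < n)%N by [].
  case: i => [[|m] hm].
    by exists (Ordinal h1); apply/eqP => /(congr1 val).
  by exists (Ordinal h0); apply/eqP => /(congr1 val).
have step : forall k (hk : (k < n)%N), (FF (c k) <= FF (c k.+1)) /\
   (strictly_convex_on (@Omega R n) psi -> a ord0 (Ordinal hk) < b ord0 (Ordinal hk) ->
     FF (c k) < FF (c k.+1)).
  move=> k hk.
  have := @mono (c k) (c k.+1) (Ordinal hk) hP (cp k) _ _ (oth _).
  rewrite !mxE /= ltnn ltnSn; apply.
  - move=> j hj; rewrite !mxE ltnS leq_eqVlt.
    have -> : (nat_of_ord j == k) = false.
      apply/negbTE; apply: contra hj => /eqP h; apply/eqP/val_inj => /=.
      exact: h.
    by [].
  - exact: hab.
have chain : forall d k, (k + d <= n)%N -> FF (c k) <= FF (c (k + d)%N).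
  elim=> [|d IH] k hkd; first by rewrite addn0.
  rewrite addnS; apply: (@le_trans _ _ (FF (c (k + d)%N))).
    by apply: IH; apply: leq_trans hkd; rewrite leq_add2l.
  by have [] := step (k + d)%N (leq_trans (eq_leq (esym (addnS k d))) hkd).
split.
  by have := chain n 0%N; rewrite add0n c0 cn; apply.
move=> hs [i hi].
have := chain i 0%N; rewrite add0n c0 => /(_ (ltnW (ltn_ord i))) h1.
have := chain (n - i.+1)%N i.+1; rewrite subnKC // cn => /(_ (leqnn _)) h2.
have [_ h3] := step i (ltn_ord i).
have h4 : FF (c i) < FF (c i.+1).
  by apply: h3 => //; rewrite (_ : Ordinal _ = i) //; apply: val_inj.
by apply: (le_lt_trans h1); apply: (lt_le_trans h4).
Qed.

End H.

Theorem lemma2p8 (R : realType) (n : nat) (psi : 'rV[R]_n -> R)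
  (a b : 'rV[R]_n) :
  (2 <= n)%N ->
  (forall i, 0 < a ord0 i) -> (forall i, a ord0 i <= b ord0 i) ->
  let alpha := \sum_(i < n) a ord0 i in
  let beta := \sum_(i < n) b ord0 i in
  (in_Psi psi ->
     alpha * psi (alpha^-1 *: a) <= beta * psi (beta^-1 *: b)) /\
  (in_Psi_sc psi -> (exists i, a ord0 i < b ord0 i) ->
     alpha * psi (alpha^-1 *: a) < beta * psi (beta^-1 *: b)).
Proof.
move=> hn ha hab alpha beta; split.
  by move=> hP; have [] := (@mainH R n psi a b hn ha hab hP).
by move=> [hP hs]; have [_] := (@mainH R n psi a b hn ha hab hP); apply.
Qed.
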